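(* Let $n\ge 2$ and let $(a_1,a_2,\dots,a_n)\in\mathbb{N}^n$ with $a_1\ge 2$. Choose a prime $\ell>\max\{a_1,\dots,a_n\}$ and write its base-$a_1$ expansion as \[ \ell=c_d a_1^{d-1}+c_{d-1}a_1^{d-2}+\cdots+c_2a_1+c_1,\qquad 0\le c_i<a_1. \] For each $2\le k\le n$ define \[ \mathcal{P}_k(x)=\frac{a_k}{\ell\,a_1}\,x\,\bigl(c_d x^{d-1}+c_{d-1}x^{d-2}+\cdots+c_1\bigr), \] and consider the curve $\Gamma:[0,a_1]\to\mathbb{R}^n$, $\Gamma(x)=\bigl(x,\mathcal{P}_2(x),\mathcal{P}_3(x),\dots,\mathcal{P}_n(x)\bigr)$. Then: (a) $\Gamma(0)=(0,0,\dots,0)$ and $\Gamma(a_1)=(a_1,a_2,\dots,a_n)$; (b) for every integer $1\le x\le a_1-1$, none of the values $\mathcal{P}_k(x)$ ($2\le k\le n$) is an integer; hence $\Gamma$ meets no lattice point of $\mathbb{Z}^n$ other than $\Gamma(0)$ and $\Gamma(a_1)$.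
   Context: $\mathbb{N}$ denotes the positive integers. *)

(* Defs.v *)
From mathcomp Require Import all_boot all_order all_algebra.
From mathcomp Require Import reals.
Set Implicit Arguments. Unset Strict Implicit. Unset Printing Implicit Defensive.
Import Order.TTheory GRing.Theory Num.Theory.
Local Open Scope ring_scope.

Definition digit_poly (R : realType) (c : nat -> nat) (d : nat) (x : R) : R :=
  \sum_(1 <= i < d.+1) (c i)%:R * x ^+ i.-1.

Definition Pk (R : realType) (a1 ak l : nat) (c : nat -> nat) (d : nat) (x : R) : R :=
  (ak%:R / (l%:R * a1%:R)) * x * digit_poly c d x.

Definition Gamma (R : realType) (a : nat -> nat) (l : nat) (c : nat -> nat) (d : nat)
  (x : R) (k : nat) : R :=
  if k == 1%N then x else Pk (a 1%N) (a k) l c d x.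

Definition is_integer (R : realType) (x : R) : Prop := exists z : int, x = z%:~R.

(* Main.v *)
Require Import Defs.
From mathcomp Require Import all_boot all_order all_algebra.
From mathcomp Require Import reals zify ring.
Import Order.TTheory GRing.Theory Num.Theory.
Local Open Scope ring_scope.

Definition Dn (c : nat -> nat) (d x : nat) : nat := (\sum_(1 <= i < d.+1) c i * x ^ i.-1)%N.

Lemma Dn_nat (R : realType) c d (x : nat) : digit_poly c d (x%:R : R) = (Dn c d x)%:R.
Proof.
rewrite /digit_poly /Dn natr_sum; apply: eq_bigr => i _.
by rewrite natrM natrX.
Qed.

Lemma Dn_bounds c d a1 l x : (2 <= a1)%N -> (a1 < l)%N -> prime l -> (forall i, (1 <= i <= d)%N -> (c i < a1)%N) ->
  l = Dn c d a1 -> (1 <= x)%N -> (x < a1)%N -> (0 < Dn c d x < l)%N.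
Proof.
move=> ha1 hal pl hc hl hx1 hxa.
have [/hasP [i0 hi0 ci0]|/hasPn hn] := boolP (has (fun i => 0 < c i)%N (index_iota 2 d.+1)).
  have hi0' : i0 \in index_iota 1 d.+1.
    by move: hi0; rewrite !mem_index_iota => /andP[h1 h2]; rewrite h2 (leq_trans _ h1).
  have i0ge2 : (2 <= i0)%N by move: hi0; rewrite mem_index_iota => /andP[].
  rewrite /Dn !(bigD1_seq i0 hi0' (iota_uniq _ _)) /= in hl *.
  apply/andP; split.
    by rewrite ltn_addr // muln_gt0 ci0 expn_gt0 hx1.
  rewrite hl -addSn leq_add //.
    rewrite ltn_mul2l ci0 /= ltn_exp2r //.
    by case: (i0) i0ge2 => [|[|]].
  apply: leq_sum => i _; apply: leq_mul => //.
  by case: (i.-1) => [|e] //; rewrite leq_exp2r // ltnW.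
exfalso.
move: hl; rewrite /Dn.
case: d hn hc => [|d] hn hc.
  by rewrite big_geq // => hl; move: pl; rewrite hl.
rewrite big_ltn // big1_seq ?addn0 ?expn0 ?muln1 => [hl|i /andP[_ hi]].
  have := hal; rewrite hl ltnNge => /negP; apply.
  by apply: ltnW; apply: hc.
by have := hn i hi; rewrite lt0n negbK => /eqP ->.
Qed.

Lemma notint (R : realType) c d a1 ak l x : (2 <= a1)%N -> (a1 < l)%N -> prime l ->
  (forall i, (1 <= i <= d)%N -> (c i < a1)%N) -> l = Dn c d a1 ->
  (0 < ak)%N -> (ak < l)%N -> (1 <= x <= a1 - 1)%N ->
  ~ is_integer (Pk a1 ak l c d (x%:R : R)).
Proof.
move=> ha1 hal pl hc hl hak hakl /andP[hx1 hxa].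
have hxa' : (x < a1)%N by lia.
have [D0 Dl] := andP (@Dn_bounds c d a1 l x ha1 hal pl hc hl hx1 hxa').
have l0 : (0 < l)%N by exact: prime_gt0.
have a10 : (0 < a1)%N by lia.
rewrite /Pk Dn_nat => -[[m|m] hz].
  have E : (m * (l * a1))%:R = (ak * x * Dn c d x)%:R :> R.
    have hz' : _ = m%:R := hz.
    rewrite !natrM -hz'; field.
    by rewrite !pnatr_eq0 -!lt0n a10 l0.
  move/eqP: E; rewrite eqr_nat => /eqP E.
  have : (l %| ak * x * Dn c d x)%N by rewrite -E dvdn_mull // dvdn_mulr.
  rewrite !Euclid_dvdM // => /orP[/orP[]|] h.
  - by have := dvdn_leq hak h; lia.
  - by have := dvdn_leq hx1 h; lia.
  - by have := dvdn_leq D0 h; lia.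
move: hz; rewrite NegzE mulrNz => hz.
have {}hz : _ = - (m.+1)%:R :> R := hz.
have : (0 : R) <= - (m.+1)%:R.
  rewrite -[X in _ <= X]hz; apply: mulr_ge0; last exact: ler0n.
  apply: mulr_ge0; last exact: ler0n.
  apply: divr_ge0; first exact: ler0n.
  apply: mulr_ge0; exact: ler0n.
by rewrite oppr_ge0 lern0.
Qed.

Theorem lemma2p2 (R : realType) (n : nat) (a : nat -> nat) (l : nat)
  (c : nat -> nat) (d : nat) :
  (2 <= n)%N ->
  (forall k, (1 <= k <= n)%N -> (0 < a k)%N) ->
  (2 <= a 1%N)%N ->
  prime l ->
  (forall k, (1 <= k <= n)%N -> (a k < l)%N) ->
  l = (\sum_(1 <= i < d.+1) c i * a 1%N ^ i.-1)%N ->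
  (forall i, (1 <= i <= d)%N -> (c i < a 1%N)%N) ->
  (* (a) endpoints *)
  (forall k, (1 <= k <= n)%N ->
     Gamma a l c d (0 : R) k = 0 /\ Gamma a l c d ((a 1%N)%:R : R) k = (a k)%:R)
  /\
  (* (b) no P_k takes an integer value at integers 1 <= x <= a_1 - 1 *)
  (forall k, (2 <= k <= n)%N -> forall x : nat, (1 <= x <= a 1%N - 1)%N ->
     ~ is_integer (Pk (a 1%N) (a k) l c d (x%:R : R)))
  /\
  (* hence Gamma on [0, a_1] meets no lattice point other than its endpoints *)
  (forall x : R, 0 <= x <= (a 1%N)%:R ->
     (forall k, (1 <= k <= n)%N -> is_integer (Gamma a l c d x k)) ->
     x = 0 \/ x = (a 1%N)%:R).
Proof.
move=> hn hpos ha1 pl hlt hl hc.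
have hl' : l = Dn c d (a 1%N) by [].
have hal : (a 1%N < l)%N by apply: hlt; lia.
have l0 : (0 < l)%N by exact: prime_gt0.
have hB : forall k, (2 <= k <= n)%N -> forall x : nat, (1 <= x <= a 1%N - 1)%N ->
     ~ is_integer (Pk (a 1%N) (a k) l c d (x%:R : R)).
  move=> k hk x hx; apply: notint => //.
  - by apply: hpos; lia.
  - by apply: hlt; lia.
split; last split => //.
  move=> k hk; rewrite /Gamma; case: eqP => [->|_]; split => //.
    by rewrite /Pk mulr0 mul0r.
  rewrite /Pk -/(Dn c d (a 1%N)) Dn_nat -hl'.
  field; rewrite !pnatr_eq0 -!lt0n l0 /=; lia.
move=> x /andP[x0 xa] hint.
have [z hz] := hint 1%N (ltac:(lia)).
rewrite /Gamma eqxx in hz.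
case: z hz => [m|m] hz; last first.
  by move: x0; rewrite hz NegzE mulrNz oppr_ge0 lern0.
have hm : x = m%:R := hz.
have : (m <= a 1%N)%N by rewrite -(ler_nat R) -hm.
case: m hm {hz} => [|m] hm hma; first by left.
have [e|ne] := eqVneq m.+1 (a 1%N); first by right; rewrite hm e.
exfalso; apply: (hB 2%N (ltac:(lia)) m.+1 (ltac:(lia))).
have := hint 2%N (ltac:(lia)); by rewrite /Gamma /= hm.
Qed.
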